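(* A homomorphism $a:X\to G$ is a generalized subgroup of $G$ if and only if (a) $\mathrm{Ker}(a)$ is contained in the center of $X$, and (b) $\mathrm{Hom}(X,\mathrm{Ker}(a))=0$.
   Context: A homomorphism $a:X\to G$ is a generalized subgroup of $G$ if the map $\mathrm{Hom}(X,X)\to\mathrm{Hom}(X,G)$, $f\mapsto af$, is injective. $\mathrm{Hom}(A,B)=0$ means the only homomorphism $A\to B$ is trivial. *)

(* Defs.v *)
From Stdlib Require Import Classical.

Set Implicit Arguments.
Unset Strict Implicit.

Record Group := MkGroup {
  carrier :> Type;
  gmul : carrier -> carrier -> carrier;
  gone : carrier;
  ginv : carrier -> carrier;
  gmulA : forall x y z, gmul x (gmul y z) = gmul (gmul x y) z;
  gmul1g : forall x, gmul gone x = x;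
  gmulg1 : forall x, gmul x gone = x;
  gmulVg : forall x, gmul (ginv x) x = gone;
  gmulgV : forall x, gmul x (ginv x) = gone
}.

Arguments gmul {g}.
Arguments gone {g}.
Arguments ginv {g}.

Definition is_hom {X G : Group} (f : X -> G) : Prop :=
  forall x y : X, f (gmul x y) = gmul (f x) (f y).

Definition in_ker {X G : Group} (a : X -> G) (x : X) : Prop := a x = gone.

Definition in_center {X : Group} (z : X) : Prop :=
  forall x : X, gmul z x = gmul x z.

Lemma hom_one {X G : Group} (a : X -> G) : is_hom a -> a gone = gone.
Proof.
  intro Ha.
  assert (H : a gone = gmul (a gone) (a gone)).
  { rewrite <- Ha. rewrite gmul1g. reflexivity. }
  assert (H2 : gmul (ginv (a gone)) (a gone)
               = gmul (ginv (a gone)) (gmul (a gone) (a gone))) by (rewrite <- H; reflexivity).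
  rewrite gmulA, gmulVg, gmul1g in H2. symmetry; exact H2.
Qed.

Lemma hom_inv {X G : Group} (a : X -> G) (x : X) :
  is_hom a -> a (ginv x) = ginv (a x).
Proof.
  intro Ha.
  assert (H : gmul (a (ginv x)) (a x) = gone).
  { rewrite <- Ha, gmulVg. apply hom_one; exact Ha. }
  assert (H2 : gmul (gmul (a (ginv x)) (a x)) (ginv (a x)) = gmul gone (ginv (a x)))
    by (rewrite H; reflexivity).
  rewrite <- gmulA, gmulgV, gmulg1, gmul1g in H2. exact H2.
Qed.

Section Kernel.
Variables (X G : Group) (a : X -> G) (Ha : is_hom a).

Definition ker_type := { x : X | a x = gone }.

Definition ker_mul (u v : ker_type) : ker_type.
Proof.
  refine (exist _ (gmul (proj1_sig u) (proj1_sig v)) _).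
  rewrite Ha, (proj2_sig u), (proj2_sig v). apply gmul1g.
Defined.

Definition ker_one : ker_type := exist _ gone (hom_one Ha).

Definition ker_inv (u : ker_type) : ker_type.
Proof.
  refine (exist _ (ginv (proj1_sig u)) _).
  rewrite (hom_inv _ Ha), (proj2_sig u).
  rewrite <- (gmul1g (ginv gone)). apply gmulgV.
Defined.

Lemma ker_eq (u v : ker_type) : proj1_sig u = proj1_sig v -> u = v.
Proof.
  destruct u as [x px], v as [y py]; simpl; intro E; subst y.
  rewrite (proof_irrelevance _ px py); reflexivity.
Qed.

Definition kernel_group : Group.
Proof.
  refine (@MkGroup ker_type ker_mul ker_one ker_inv _ _ _ _ _);
  intros; apply ker_eq; simpl;
  [apply gmulA | apply gmul1g | apply gmulg1 | apply gmulVg | apply gmulgV].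
Defined.

End Kernel.

Definition generalized_subgroup {X G : Group} (a : X -> G) : Prop :=
  forall f g : X -> X, is_hom f -> is_hom g ->
    (forall x, a (f x) = a (g x)) -> forall x, f x = g x.

Definition hom_zero (A B : Group) : Prop :=
  forall h : A -> B, is_hom h -> forall x, h x = gone.

(* Main.v *)
Require Import Defs.
From Stdlib Require Import Classical.

Section GL.
Variable X : Group.
Lemma mulKV (x y : X) : gmul (gmul x (ginv y)) y = x.
Proof. rewrite <- gmulA, gmulVg, gmulg1. reflexivity. Qed.
Lemma mulVK (x y : X) : gmul (gmul x y) (ginv y) = x.
Proof. rewrite <- gmulA, gmulgV, gmulg1. reflexivity. Qed.
Lemma lcancel (x y z : X) : gmul x y = gmul x z -> y = z.
Proof.
  intro H. assert (H2 : gmul (ginv x) (gmul x y) = gmul (ginv x) (gmul x z)) by (rewrite H; reflexivity).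
  rewrite !gmulA, gmulVg, !gmul1g in H2. exact H2.
Qed.
Lemma rcancel (x y z : X) : gmul y x = gmul z x -> y = z.
Proof.
  intro H. assert (H2 : gmul (gmul y x) (ginv x) = gmul (gmul z x) (ginv x)) by (rewrite H; reflexivity).
  rewrite !mulVK in H2. exact H2.
Qed.
Lemma inv1 : ginv (@gone X) = gone.
Proof. rewrite <- (gmul1g (ginv gone)). apply gmulgV. Qed.
Lemma invM (x y : X) : ginv (gmul x y) = gmul (ginv y) (ginv x).
Proof.
  apply (lcancel (gmul x y)). rewrite gmulgV.
  rewrite gmulA, <- (gmulA x y), gmulgV, gmulg1, gmulgV. reflexivity.
Qed.
End GL.

Theorem proposition4p2 (X G : Group) (a : X -> G) (Ha : is_hom a) :
  generalized_subgroup a <->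
  ((forall k : X, in_ker a k -> in_center k) /\
   hom_zero X (kernel_group Ha)).
Proof.
  assert (Hinv := fun x => hom_inv (a:=a) x Ha).
  split.
  - intro GS.
    assert (Cen : forall k : X, in_ker a k -> in_center k).
    { intros k Hk x. unfold in_ker in Hk.
      assert (E := GS (fun x => gmul (gmul k x) (ginv k)) (fun x => x)).
      assert (E' : gmul (gmul k x) (ginv k) = x).
      { apply E.
        - intros u v. rewrite !gmulA, mulKV. reflexivity.
        - intros u v; reflexivity.
        - intro u. rewrite !Ha, Hinv, Hk, inv1, gmul1g, gmulg1. reflexivity. }
      rewrite <- E' at 2. rewrite mulKV. reflexivity. }
    split; [exact Cen|].
    intros h Hh x.
    assert (Hc : forall u, in_center (proj1_sig (h u))).
    { intro u. apply Cen. exact (proj2_sig (h u)). }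
    assert (Hm : forall u v, proj1_sig (h (gmul u v)) = gmul (proj1_sig (h u)) (proj1_sig (h v))).
    { intros u v. rewrite Hh. reflexivity. }
    assert (E : gmul x (proj1_sig (h x)) = x).
    { apply (GS (fun x => gmul x (proj1_sig (h x))) (fun x => x)).
      - intros u v. rewrite Hm. rewrite !gmulA. f_equal.
        rewrite <- !gmulA. f_equal. symmetry. apply Hc.
      - intros u v; reflexivity.
      - intro u. rewrite Ha, (proj2_sig (h u)), gmulg1. reflexivity. }
    apply ker_eq. simpl.
    apply (@lcancel _ x). rewrite gmulg1. exact E.
  - intros [Cen HZ] f g Hf Hg Eq x.
    assert (Kd : forall x, a (gmul (ginv (g x)) (f x)) = gone).
    { intro u. rewrite Ha, Hinv, Eq, gmulVg. reflexivity. }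
    set (d := fun u => (exist _ _ (Kd u) : kernel_group Ha)).
    assert (Hd : is_hom d).
    { intros u v. apply ker_eq. simpl.
      rewrite Hf, Hg, invM.
      transitivity (gmul (gmul (ginv (g v)) (gmul (ginv (g u)) (f u))) (f v)).
      { rewrite !gmulA. reflexivity. }
      rewrite <- (Cen _ (Kd u) (ginv (g v))).
      rewrite !gmulA. reflexivity. }
    assert (E := HZ d Hd x).
    apply (f_equal (@proj1_sig _ _)) in E. simpl in E.
    apply (@lcancel _ (ginv (g x))). rewrite E, gmulVg. reflexivity.
Qed.
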